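(* Let $n_{\mathrm{pot}},n_{\mathrm{kin}},m,\ell\in\mathbb{N}_0$, let $U_{\mathrm{pos}}\subset\mathbb{R}^{n_{\mathrm{pot}}}$ be open, and let $A:U_{\mathrm{pos}}\to\mathbb{R}^{\ell\times n_{\mathrm{kin}}}$, $B:U_{\mathrm{pos}}\to\mathbb{R}^{n_{\mathrm{kin}}\times m}$, $G:\mathbb{R}^{n_{\mathrm{kin}}}\to\mathbb{R}^{n_{\mathrm{kin}}\times n_{\mathrm{kin}}}$, $Z:U_{\mathrm{pos}}\to\mathbb{R}^{n_{\mathrm{pot}}\times n_{\mathrm{kin}}}$ be continuous. Assume that $A$ has constant rank on $U_{\mathrm{pos}}$ and that $G(\bm{\Gamma})$ is skew-symmetric for all $\bm{\Gamma}\in\mathbb{R}^{n_{\mathrm{kin}}}$. Set $N=n_{\mathrm{pot}}+2n_{\mathrm{kin}}+m$. For $(\bm{\zeta},\bm{\Gamma})\in U_{\mathrm{pos}}\times\mathbb{R}^{n_{\mathrm{kin}}}$ let $\mathcal{D}_{(\bm{\zeta},\bm{\Gamma})}\subset\mathbb{R}^N\times\mathbb{R}^N$ be the set of all pairs of a flow $f=(\bm{\varpi}_{\mathcal{L},f},\bm{\tau}_{\mathcal{L},f},\bm{\varpi}_{\mathcal{R}},\bm{\varpi}_{\mathrm{ext}})\in\mathbb{R}^{n_{\mathrm{pot}}}\times\mathbb{R}^{n_{\mathrm{kin}}}\times\mathbb{R}^{n_{\mathrm{kin}}}\times\mathbb{R}^m$ and an effort $e=(\bm{\tau}_{\mathcal{L},e},\bm{\varpi}_{\mathcal{L},e},\bm{\tau}_{\mathcal{R}},\bm{\tau}_{\mathrm{ext}})\in\mathbb{R}^{n_{\mathrm{pot}}}\times\mathbb{R}^{n_{\mathrm{kin}}}\times\mathbb{R}^{n_{\mathrm{kin}}}\times\mathbb{R}^m$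 such that $\bm{\varpi}_{\mathcal{L},f}=Z(\bm{\zeta})\bm{\varpi}_{\mathcal{L},e}$, $\bm{\varpi}_{\mathcal{R}}=\bm{\varpi}_{\mathcal{L},e}$, $A(\bm{\zeta})\bm{\varpi}_{\mathcal{L},e}=0$, $\bm{\varpi}_{\mathrm{ext}}=B(\bm{\zeta})^\top\bm{\varpi}_{\mathcal{L},e}$, and there exists $\bm{\mu}\in\mathbb{R}^\ell$ with $\bm{\tau}_{\mathcal{L},f}+Z(\bm{\zeta})^\top\bm{\tau}_{\mathcal{L},e}+G(\bm{\Gamma})\bm{\varpi}_{\mathcal{L},e}+\bm{\tau}_{\mathcal{R}}+B(\bm{\zeta})\bm{\tau}_{\mathrm{ext}}+A(\bm{\zeta})^\top\bm{\mu}=0$. Then the family $(\mathcal{D}_{(\bm{\zeta},\bm{\Gamma})})_{(\bm{\zeta},\bm{\Gamma})\in U_{\mathrm{pos}}\times\mathbb{R}^{n_{\mathrm{kin}}}}$ is a modulated Dirac structure.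
   Context: A subspace $\mathcal{D}\subset\mathbb{R}^N\times\mathbb{R}^N$ is a Dirac structure if for all $f,e\in\mathbb{R}^N$: $(f,e)\in\mathcal{D}$ if and only if $\hat f^\top e+f^\top\hat e=0$ for all $(\hat f,\hat e)\in\mathcal{D}$. For $U\subset\mathbb{R}^k$ open, a family $(\mathcal{D}_x)_{x\in U}$ of subspaces of $\mathbb{R}^N\times\mathbb{R}^N$ is a modulated Dirac structure if for every $x\in U$: (a) $\mathcal{D}_x$ is a Dirac structure, and (b) there exist a neighborhood $U_x\subset U$ of $x$ and a family $(T_y)_{y\in U_x}$ of linear bijective maps $T_y:\mathbb{R}^N\to\mathcal{D}_y$ such that for every $z\in\mathbb{R}^N$ the map $y\mapsto T_yz$ from $U_x$ to $\mathbb{R}^N\times\mathbb{R}^N$ is continuous. Here the modulating parameter $(\bm{\zeta},\bm{\Gamma})$ ranges over the open set $U_{\mathrm{pos}}\times\mathbb{R}^{n_{\mathrm{kin}}}\subset\mathbb{R}^{n_{\mathrm{pot}}+n_{\mathrm{kin}}}$. *)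

(* Defs.v *)
(* R : realType, vectors in R^n are column vectors 'cV[R]_n,
   with the product (sup-norm) topology on matrices from matrix_normedtype. *)
From HB Require Import structures.
From mathcomp Require Import all_boot all_order all_algebra.
From mathcomp Require Import all_classical all_reals all_analysis.
Set Implicit Arguments. Unset Strict Implicit. Unset Printing Implicit Defensive.
Import Order.TTheory GRing.Theory Num.Theory.
Import numFieldNormedType.Exports.
Local Open Scope classical_set_scope.
Local Open Scope ring_scope.

Definition is_subspace (R : realType) (N : nat) (D : set ('cV[R]_N * 'cV[R]_N)) :=
  D (0, 0) /\
  (forall p q, D p -> D q -> D (p.1 + q.1, p.2 + q.2)) /\
  (forall (a : R) p, D p -> D (a *: p.1, a *: p.2)).

Definition dirac_structure (R : realType) (N : nat) (D : set ('cV[R]_N * 'cV[R]_N)) :=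
  is_subspace D /\
  forall f e : 'cV[R]_N,
    D (f, e) <-> (forall fh eh, D (fh, eh) -> fh^T *m e + f^T *m eh = 0).

Definition modulated_dirac (R : realType) (k N : nat) (U : set 'cV[R]_k)
    (D : 'cV[R]_k -> set ('cV[R]_N * 'cV[R]_N)) :=
  forall x, U x ->
    dirac_structure (D x) /\
    exists (Ux : set 'cV[R]_k) (T : 'cV[R]_k -> 'cV[R]_N -> 'cV[R]_N * 'cV[R]_N),
      [/\ open Ux, Ux x, Ux `<=` U &
       (forall y, Ux y ->
          [/\ (forall (a : R) z1 z2,
                 T y (a *: z1 + z2) = (a *: (T y z1).1 + (T y z2).1,
                                       a *: (T y z1).2 + (T y z2).2)),
              (forall z, D y (T y z)),
              (forall z1 z2, T y z1 = T y z2 -> z1 = z2) &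
              (forall p, D y p -> exists z, T y z = p)]) /\
       (forall z, {within Ux, continuous (fun y => T y z)})].

(* Block projections of a vector in R^(npot + nkin + nkin + m). *)
Section Blocks.
Variables (R : realType) (a b c d : nat).
Definition blk1 (v : 'cV[R]_(a + b + c + d)) : 'cV[R]_a := usubmx (usubmx (usubmx v)).
Definition blk2 (v : 'cV[R]_(a + b + c + d)) : 'cV[R]_b := dsubmx (usubmx (usubmx v)).
Definition blk3 (v : 'cV[R]_(a + b + c + d)) : 'cV[R]_c := dsubmx (usubmx v).
Definition blk4 (v : 'cV[R]_(a + b + c + d)) : 'cV[R]_d := dsubmx v.
End Blocks.

Definition port_D (R : realType) (npot nkin m l : nat)
    (A : 'cV[R]_npot -> 'M[R]_(l, nkin)) (B : 'cV[R]_npot -> 'M[R]_(nkin, m))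
    (G : 'cV[R]_nkin -> 'M[R]_nkin) (Z : 'cV[R]_npot -> 'M[R]_(npot, nkin))
    (zeta : 'cV[R]_npot) (Gam : 'cV[R]_nkin)
    (fe : 'cV[R]_(npot + nkin + nkin + m) * 'cV[R]_(npot + nkin + nkin + m)) : Prop :=
  let f := fe.1 in let e := fe.2 in
  [/\ blk1 f = Z zeta *m blk2 e,
      blk3 f = blk2 e,
      A zeta *m blk2 e = 0,
      blk4 f = (B zeta)^T *m blk2 e &
      exists mu : 'cV[R]_l,
        blk2 f + (Z zeta)^T *m blk1 e + G Gam *m blk2 e + blk3 e
          + B zeta *m blk4 e + (A zeta)^T *m mu = 0].

(* Main.v *)
Require Import Defs.
From HB Require Import structures.
From mathcomp Require Import all_boot all_order all_algebra.
From mathcomp Require Import all_classical all_reals all_analysis.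
From mathcomp Require Import fingroup perm.
From mathcomp Require Import ring lra.
Import Order.TTheory GRing.Theory Num.Theory.
Import numFieldNormedType.Exports.
Local Open Scope classical_set_scope.
Local Open Scope ring_scope.
Section Alg.
Variable R : realType.

Definition dot {n} (u v : 'cV[R]_n) : R := (u^T *m v) 0 0.

Lemma dotC n (u v : 'cV[R]_n) : dot u v = dot v u.
Proof. by rewrite /dot !mxE; apply: eq_bigr => i _; rewrite !mxE mulrC. Qed.

Lemma dotDl n (u v w : 'cV[R]_n) : dot (u + v) w = dot u w + dot v w.
Proof. by rewrite /dot linearD /= mulmxDl mxE. Qed.

Lemma dotDr n (u v w : 'cV[R]_n) : dot w (u + v) = dot w u + dot w v.
Proof. by rewrite /dot mulmxDr mxE. Qed.

Lemma dotNl n (u w : 'cV[R]_n) : dot (- u) w = - dot u w.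
Proof. by rewrite /dot linearN /= mulNmx mxE. Qed.

Lemma dotNr n (u w : 'cV[R]_n) : dot w (- u) = - dot w u.
Proof. by rewrite /dot mulmxN mxE. Qed.

Lemma dotZl n a (u w : 'cV[R]_n) : dot (a *: u) w = a * dot u w.
Proof. by rewrite /dot linearZ /= -scalemxAl mxE. Qed.

Lemma dotZr n a (u w : 'cV[R]_n) : dot w (a *: u) = a * dot w u.
Proof. by rewrite /dot -scalemxAr mxE. Qed.

Lemma dot0l n (w : 'cV[R]_n) : dot 0 w = 0.
Proof. by rewrite /dot trmx0 mul0mx mxE. Qed.

Lemma dot0r n (w : 'cV[R]_n) : dot w 0 = 0.
Proof. by rewrite /dot mulmx0 mxE. Qed.

Lemma dotMl n p (M : 'M[R]_(p,n)) (u : 'cV[R]_n) v : dot (M *m u) v = dot u (M^T *m v).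
Proof. by rewrite /dot trmx_mul mulmxA. Qed.

Lemma dotMr n p (M : 'M[R]_(n,p)) (u : 'cV[R]_p) v : dot v (M *m u) = dot (M^T *m v) u.
Proof. by rewrite dotMl trmxK. Qed.

Lemma dot_self_eq0 n (u : 'cV[R]_n) : dot u u = 0 -> u = 0.
Proof.
rewrite /dot mxE => /eqP; rewrite psumr_eq0; last first.
  by move=> i _; rewrite !mxE -expr2 sqr_ge0.
move=> /allP H; apply/matrixP => i j; rewrite (ord1 j) mxE.
have := H i (mem_index_enum _); rewrite mxE mulf_eq0 orbb => /eqP //.
Qed.

Lemma mx11_eq0 (M : 'M[R]_1) : (M = 0) <-> M 0 0 = 0.
Proof.
split=> [->|H]; first by rewrite mxE.
by apply/matrixP => i j; rewrite (ord1 i) (ord1 j) H mxE.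
Qed.

Lemma dot_pair n (a b c d : 'cV[R]_n) :
  (a^T *m b + c^T *m d = 0) <-> dot a b + dot c d = 0.
Proof. by rewrite mx11_eq0 mxE. Qed.

Lemma dot_ext n (u v : 'cV[R]_n) : (forall w, dot w u = dot w v) -> u = v.
Proof.
move=> H; apply/eqP; rewrite -subr_eq0; apply/eqP/dot_self_eq0.
by rewrite dotDr dotNr H subrr.
Qed.

Lemma orth_range l k (A : 'M[R]_(l,k)) (v : 'cV[R]_k) :
  (forall w, A *m w = 0 -> dot w v = 0) -> exists mu, v = A^T *m mu.
Proof.
move=> H.
have sub : (v^T <= A)%MS.
  rewrite submxE; apply/eqP.
  apply: trmx_inj; rewrite trmx_mul trmxK trmx0.
  apply/matrixP => j i; rewrite (ord1 i) [RHS]mxE.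
  have := H (cokermx A *m delta_mx j 0).
  rewrite mulmxA mulmx_coker mul0mx => /(_ erefl).
  rewrite /dot trmx_mul trmx_delta -mulmxA -rowE mxE => <-.
  by rewrite !mxE.
have [D hD] := submxP sub.
by exists D^T; rewrite -[v]trmxK hD trmx_mul.
Qed.

Section Blocks.
Variables (a b c d : nat).
Definition mk (u1 : 'cV[R]_a) (u2 : 'cV[R]_b) (u3 : 'cV[R]_c) (u4 : 'cV[R]_d)
  : 'cV[R]_(a + b + c + d) := col_mx (col_mx (col_mx u1 u2) u3) u4.

Lemma blk1_mk u1 u2 u3 u4 : blk1 (mk u1 u2 u3 u4) = u1.
Proof. by rewrite /blk1 /mk !col_mxKu. Qed.
Lemma blk2_mk u1 u2 u3 u4 : blk2 (mk u1 u2 u3 u4) = u2.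
Proof. by rewrite /blk2 /mk !col_mxKu col_mxKd. Qed.
Lemma blk3_mk u1 u2 u3 u4 : blk3 (mk u1 u2 u3 u4) = u3.
Proof. by rewrite /blk3 /mk !col_mxKu col_mxKd. Qed.
Lemma blk4_mk u1 u2 u3 u4 : blk4 (mk u1 u2 u3 u4) = u4.
Proof. by rewrite /blk4 /mk col_mxKd. Qed.

Lemma mkK (v : 'cV[R]_(a + b + c + d)) : mk (blk1 v) (blk2 v) (blk3 v) (blk4 v) = v.
Proof. by rewrite /mk /blk1 /blk2 /blk3 /blk4 !vsubmxK. Qed.

Lemma blk_ext (u v : 'cV[R]_(a + b + c + d)) :
  blk1 u = blk1 v -> blk2 u = blk2 v -> blk3 u = blk3 v -> blk4 u = blk4 v -> u = v.
Proof. by move=> h1 h2 h3 h4; rewrite -(mkK u) -(mkK v) h1 h2 h3 h4. Qed.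

Lemma blk1P s (u v : 'cV[R]_(a + b + c + d)) : blk1 (s *: u + v) = s *: blk1 u + blk1 v.
Proof. by rewrite /blk1 !linearP. Qed.
Lemma blk2P s (u v : 'cV[R]_(a + b + c + d)) : blk2 (s *: u + v) = s *: blk2 u + blk2 v.
Proof. by rewrite /blk2 !linearP. Qed.
Lemma blk3P s (u v : 'cV[R]_(a + b + c + d)) : blk3 (s *: u + v) = s *: blk3 u + blk3 v.
Proof. by rewrite /blk3 !linearP. Qed.
Lemma blk4P s (u v : 'cV[R]_(a + b + c + d)) : blk4 (s *: u + v) = s *: blk4 u + blk4 v.
Proof. by rewrite /blk4 !linearP. Qed.

Lemma blk1_0 : blk1 (0 : 'cV[R]_(a + b + c + d)) = 0.
Proof. by rewrite /blk1 !linear0. Qed.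
Lemma blk2_0 : blk2 (0 : 'cV[R]_(a + b + c + d)) = 0.
Proof. by rewrite /blk2 !linear0. Qed.
Lemma blk3_0 : blk3 (0 : 'cV[R]_(a + b + c + d)) = 0.
Proof. by rewrite /blk3 !linear0. Qed.
Lemma blk4_0 : blk4 (0 : 'cV[R]_(a + b + c + d)) = 0.
Proof. by rewrite /blk4 !linear0. Qed.

Lemma dot_mk u1 u2 u3 u4 v1 v2 v3 v4 :
  dot (mk u1 u2 u3 u4) (mk v1 v2 v3 v4) = dot u1 v1 + dot u2 v2 + dot u3 v3 + dot u4 v4.
Proof. by rewrite /dot /mk !tr_col_mx !mul_row_col !mxE. Qed.

Lemma dot_blk (u v : 'cV[R]_(a + b + c + d)) :
  dot u v = dot (blk1 u) (blk1 v) + dot (blk2 u) (blk2 v) + dot (blk3 u) (blk3 v) + dot (blk4 u) (blk4 v).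
Proof. by rewrite -{1}(mkK u) -{1}(mkK v) dot_mk. Qed.
End Blocks.
Arguments mk {a b c d}.
Lemma blk1D a b c d (u v : 'cV[R]_(a + b + c + d)) : blk1 (u + v) = blk1 u + blk1 v.
Proof. by rewrite /blk1 !linearD. Qed.
Lemma blk2D a b c d (u v : 'cV[R]_(a + b + c + d)) : blk2 (u + v) = blk2 u + blk2 v.
Proof. by rewrite /blk2 !linearD. Qed.
Lemma blk3D a b c d (u v : 'cV[R]_(a + b + c + d)) : blk3 (u + v) = blk3 u + blk3 v.
Proof. by rewrite /blk3 !linearD. Qed.
Lemma blk4D a b c d (u v : 'cV[R]_(a + b + c + d)) : blk4 (u + v) = blk4 u + blk4 v.
Proof. by rewrite /blk4 !linearD. Qed.
Lemma blk1Z a b c d s (u : 'cV[R]_(a + b + c + d)) : blk1 (s *: u) = s *: blk1 u.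
Proof. by rewrite /blk1 !linearZ. Qed.
Lemma blk2Z a b c d s (u : 'cV[R]_(a + b + c + d)) : blk2 (s *: u) = s *: blk2 u.
Proof. by rewrite /blk2 !linearZ. Qed.
Lemma blk3Z a b c d s (u : 'cV[R]_(a + b + c + d)) : blk3 (s *: u) = s *: blk3 u.
Proof. by rewrite /blk3 !linearZ. Qed.
Lemma blk4Z a b c d s (u : 'cV[R]_(a + b + c + d)) : blk4 (s *: u) = s *: blk4 u.
Proof. by rewrite /blk4 !linearZ. Qed.

Section Point.
Variables (n k m l : nat) (A : 'M[R]_(l,k)) (B : 'M[R]_(k,m)) (G : 'M[R]_k)
  (Z : 'M[R]_(n,k)).
Hypothesis hG : G^T = - G.
Notation V := ('cV[R]_(n + k + k + m)).

Definition Dm (fe : V * V) : Prop :=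
  let f := fe.1 in let e := fe.2 in
  [/\ blk1 f = Z *m blk2 e,
      blk3 f = blk2 e,
      A *m blk2 e = 0,
      blk4 f = B^T *m blk2 e &
      exists mu : 'cV[R]_l,
        blk2 f + Z^T *m blk1 e + G *m blk2 e + blk3 e
          + B *m blk4 e + A^T *m mu = 0].

Definition el (t1 : 'cV[R]_n) (w : 'cV[R]_k) (tR : 'cV[R]_k) (tx : 'cV[R]_m)
  (mu : 'cV[R]_l) : V * V :=
  (mk (Z *m w) (-(Z^T *m t1 + G *m w + tR + B *m tx + A^T *m mu)) w (B^T *m w),
   mk t1 w tR tx).

Lemma el_in t1 w tR tx mu : A *m w = 0 -> Dm (el t1 w tR tx mu).
Proof.
move=> hw; rewrite /Dm /el /= !blk1_mk !blk2_mk !blk3_mk !blk4_mk; split => //.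
by exists mu; rewrite -!addrA addNr.
Qed.

Lemma Dm_el f e : Dm (f, e) ->
  exists mu, (f, e) = el (blk1 e) (blk2 e) (blk3 e) (blk4 e) mu.
Proof.
move=> [/= h1 h3 h2 h4 [mu h5]]; exists mu; rewrite /el; congr pair; last by rewrite mkK.
apply: blk_ext; rewrite ?blk1_mk ?blk2_mk ?blk3_mk ?blk4_mk //.
apply/matrixP => i j; move/matrixP: h5 => /(_ i j); rewrite !mxE; lra.
Qed.

Lemma pair_el t1 w tR tx mu f e :
  dot (el t1 w tR tx mu).1 e + dot f (el t1 w tR tx mu).2 =
  dot t1 (blk1 f - Z *m blk2 e) + dot tR (blk3 f - blk2 e)
  + dot tx (blk4 f - B^T *m blk2 e) - dot mu (A *m blk2 e)
  + dot w (Z^T *m blk1 e + G *m blk2 e + blk3 e + B *m blk4 e + blk2 f).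
Proof.
rewrite /el /= !dot_blk !blk1_mk !blk2_mk !blk3_mk !blk4_mk.
rewrite !(dotDl, dotDr, dotNl, dotNr) !dotMl !trmxK hG mulNmx dotNr.
rewrite (dotC _ (blk1 f)) (dotC _ (blk2 f)) (dotC _ (blk3 f)) (dotC _ (blk4 f)).
lra.
Qed.

Lemma Dm_dirac : dirac_structure Dm.
Proof.
split.
  split; [|split].
  - rewrite /Dm /= !blk1_0 !blk2_0 !blk3_0 !blk4_0 !mulmx0; split => //.
    by exists 0; rewrite !mulmx0 !addr0.
  - move=> [f1 e1] [f2 e2] [/= h1 h2 h3 h4 [mu1 h5]] [/= h1' h2' h3' h4' [mu2 h5']].
    rewrite /Dm /= !blk1D !blk2D !blk3D !blk4D !mulmxDr h1 h1' h2 h2' h3 h3' add0r h4 h4'.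
    split => //; exists (mu1 + mu2).
    apply/matrixP => i j; move/matrixP: h5 => /(_ i j); move/matrixP: h5' => /(_ i j).
    rewrite !mulmxDr !mxE; lra.
  - move=> s [f1 e1] [/= h1 h2 h3 h4 [mu1 h5]].
    rewrite /Dm /= !blk1Z !blk2Z !blk3Z !blk4Z -!scalemxAr h1 h2 h3 h4 scaler0.
    split => //; exists (s *: mu1).
    by rewrite -!scalemxAr -!scalerDr h5 scaler0.
move=> f e; split.
  move=> [/= h1 h3 h2 h4 [mu /= h5]] fh eh hD.
  have [muh heq] := Dm_el _ _ hD.
  have hAw : A *m blk2 eh = 0 by case: hD.
  apply/dot_pair.
  have E2 : eh = (el (blk1 eh) (blk2 eh) (blk3 eh) (blk4 eh) muh).2 by rewrite -heq.
  have E1 : fh = (el (blk1 eh) (blk2 eh) (blk3 eh) (blk4 eh) muh).1 by rewrite -heq.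
  rewrite E2 E1 pair_el h1 h3 h4 h2 !subrr !dot0r subr0.
  have hv : Z^T *m blk1 e + G *m blk2 e + blk3 e + B *m blk4 e + blk2 f
      = - (A^T *m mu).
    apply/matrixP => i j; move/matrixP: h5 => /(_ i j); rewrite !mxE; lra.
  by rewrite hv dotNr dotMr trmxK hAw dot0l oppr0 !addr0.
move=> H.
have Hp : forall t1 w tR tx mu, A *m w = 0 ->
  dot t1 (blk1 f - Z *m blk2 e) + dot tR (blk3 f - blk2 e)
  + dot tx (blk4 f - B^T *m blk2 e) - dot mu (A *m blk2 e)
  + dot w (Z^T *m blk1 e + G *m blk2 e + blk3 e + B *m blk4 e + blk2 f) = 0.
  move=> t1 w tR tx mu hw; rewrite -pair_el; apply/dot_pair; apply: H.
  exact: el_in.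
have e1 : blk1 f = Z *m blk2 e.
  have := Hp (blk1 f - Z *m blk2 e) 0 0 0 0 (mulmx0 _ _).
  rewrite !dot0l !addr0 subr0 => /dot_self_eq0 /eqP; rewrite subr_eq0 => /eqP //.
have e3 : blk3 f = blk2 e.
  have := Hp 0 0 (blk3 f - blk2 e) 0 0 (mulmx0 _ _).
  rewrite !dot0l add0r !addr0 subr0 => /dot_self_eq0 /eqP; rewrite subr_eq0 => /eqP //.
have e4 : blk4 f = B^T *m blk2 e.
  have := Hp 0 0 0 (blk4 f - B^T *m blk2 e) 0 (mulmx0 _ _).
  rewrite !dot0l !add0r !addr0 subr0 => /dot_self_eq0 /eqP; rewrite subr_eq0 => /eqP //.
have e2 : A *m blk2 e = 0.
  have := Hp 0 0 0 0 (- (A *m blk2 e)) (mulmx0 _ _).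
  by rewrite !dot0l !add0r !addr0 dotNl opprK => /dot_self_eq0.
split => //.
have [|mu' hmu] := @orth_range _ _ A (Z^T *m blk1 e + G *m blk2 e + blk3 e + B *m blk4 e + blk2 f).
  move=> w hw; have := Hp 0 w 0 0 0 hw.
  by rewrite !dot0l !add0r oppr0 add0r.
exists (- mu'); rewrite mulmxN.
apply/matrixP => i j; move/matrixP: hmu => /(_ i j); rewrite !mxE; lra.
Qed.

End Point.
Section Proj.
Variables (k l r : nat) (A : 'M[R]_(l,k)) (S : 'M[R]_(r,l)) (X : 'M[R]_(l,r))
  (C : 'M[R]_(r,k)).
Definition Km := C *m C^T.
Definition Kim := (\det Km)^-1 *: \adj Km.
Definition Qm := C^T *m Kim *m C.
Definition Pm := 1%:M - Qm.
Hypothesis hdet : \det Km != 0.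
Hypothesis hX : A = X *m C.
Hypothesis hC : C = S *m A.

Lemma KKi : Km *m Kim = 1%:M.
Proof. by rewrite /Kim -scalemxAr mul_mx_adj scale_scalar_mx mulVf. Qed.
Lemma KiK : Kim *m Km = 1%:M.
Proof. by rewrite /Kim -scalemxAl mul_adj_mx scale_scalar_mx mulVf. Qed.

Lemma AQ : A *m Qm = A.
Proof.
rewrite /Qm {1}hX -!mulmxA (mulmxA C) -/Km (mulmxA Km) KKi mul1mx -hX //.
Qed.
Lemma AP0 : A *m Pm = 0.
Proof. by rewrite /Pm mulmxBr mulmx1 AQ subrr. Qed.
Lemma QAt : Qm *m A^T = A^T.
Proof.
rewrite /Qm hX trmx_mul !mulmxA -(mulmxA _ C) -/Km -(mulmxA _ Kim) KiK mulmx1 //.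
Qed.
Lemma PAt0 : Pm *m A^T = 0.
Proof. by rewrite /Pm mulmxBl mul1mx QAt subrr. Qed.
Lemma Qker (w : 'cV[R]_k) : A *m w = 0 -> Qm *m w = 0.
Proof. by move=> hw; rewrite /Qm -!mulmxA {2}hC -(mulmxA S) hw !mulmx0. Qed.
Lemma Qrange (p : 'cV[R]_k) : Qm *m p = A^T *m ((S^T *m Kim *m C) *m p).
Proof. by rewrite /Qm {1}hC trmx_mul !mulmxA. Qed.
Lemma PQ1 : Pm + Qm = 1%:M.
Proof. by rewrite /Pm subrK. Qed.
End Proj.
Section Tmap.
Variables (n k m l : nat) (A : 'M[R]_(l,k)) (B : 'M[R]_(k,m)) (G : 'M[R]_k)
  (Z : 'M[R]_(n,k)) (P Q : 'M[R]_k) (M : 'M[R]_(l,k)).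
Hypothesis hAP : A *m P = 0.
Hypothesis hP : P = 1%:M - Q.
Hypothesis hQ : forall p : 'cV[R]_k, Q *m p = A^T *m (M *m p).
Hypothesis hQker : forall w : 'cV[R]_k, A *m w = 0 -> Q *m w = 0.
Hypothesis hQAt : Q *m A^T = A^T.
Notation V := ('cV[R]_(n + k + k + m)).

Definition Tm (z : V) : V * V :=
  (mk (Z *m (P *m blk2 z)) (blk3 z) (P *m blk2 z) (B^T *m (P *m blk2 z)),
   mk (blk1 z) (P *m blk2 z)
     (-(blk3 z + Z^T *m blk1 z + G *m (P *m blk2 z) + B *m blk4 z) + Q *m blk2 z)
     (blk4 z)).

Lemma Tm_lin (a : R) z1 z2 : Tm (a *: z1 + z2) =
  (a *: (Tm z1).1 + (Tm z2).1, a *: (Tm z1).2 + (Tm z2).2).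
Proof.
rewrite /Tm /=; congr pair; apply: blk_ext;
  rewrite ?blk1P ?blk2P ?blk3P ?blk4P ?blk1_mk ?blk2_mk ?blk3_mk ?blk4_mk //;
  rewrite ?mulmxDr -?scalemxAr //.
apply/matrixP => i j; rewrite !mxE; ring.
Qed.

Lemma Tm_in z : Dm _ _ _ _ A B G Z (Tm z).
Proof.
rewrite /Dm /Tm /= !blk1_mk !blk2_mk !blk3_mk !blk4_mk; split => //.
  by rewrite mulmxA hAP mul0mx.
exists (- (M *m blk2 z)); rewrite mulmxN -hQ.
apply/matrixP => i j; rewrite !mxE; ring.
Qed.

Lemma Tm_inj z1 z2 : Tm z1 = Tm z2 -> z1 = z2.
Proof.
move=> /(congr1 (fun p => (blk1 p.2, blk2 p.2, blk3 p.2, blk4 p.2, blk2 p.1))).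
rewrite /Tm /= !blk1_mk !blk2_mk !blk3_mk !blk4_mk => -[h1 h2 h3 h4 h5].
rewrite h1 h2 h4 h5 in h3; move/addrI: h3 => h3.
apply: blk_ext => //.
by rewrite -[blk2 z1]mul1mx -[blk2 z2]mul1mx -(subrK Q 1%:M) -hP !mulmxDl h2 h3.
Qed.

Lemma Tm_surj p : Dm _ _ _ _ A B G Z p -> exists z, Tm z = p.
Proof.
case: p => f e [/= h1 h3 h2 h4 [mu h5]].
exists (mk (blk1 e) (blk2 e - A^T *m mu) (blk2 f) (blk4 e)).
have hq : Q *m (blk2 e - A^T *m mu) = - (A^T *m mu).
  by rewrite mulmxBr hQker // mulmxA hQAt sub0r.
have hw : P *m (blk2 e - A^T *m mu) = blk2 e.
  by rewrite hP mulmxBl mul1mx hq opprK subrK.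
rewrite /Tm !blk1_mk !blk2_mk !blk3_mk !blk4_mk hw hq.
congr pair; apply: blk_ext; rewrite ?blk1_mk ?blk2_mk ?blk3_mk ?blk4_mk //.
apply/matrixP => i j; move/matrixP: h5 => /(_ i j); rewrite !mxE; lra.
Qed.
End Tmap.
Lemma gram_det r k (C : 'M[R]_(r,k)) : row_free C -> \det (C *m C^T) != 0.
Proof.
move=> hC; rewrite -unitfE -unitmxE -row_free_unit -kermx_eq0.
apply/eqP/row_matrixP => i; rewrite row0.
set u := row i _.
have hu : u *m (C *m C^T) = 0 by apply/sub_kermxP; exact: row_sub.
have : (u *m C)^T = 0.
  apply: dot_self_eq0; rewrite /dot trmxK trmx_mul !mulmxA -(mulmxA u) hu.
  by rewrite !mul0mx mxE.
move=> /(congr1 trmx); rewrite trmxK trmx0 => /eqP.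
by rewrite mulmx_free_eq0 // => /eqP.
Qed.
End Alg.
Arguments Km {R k r}. Arguments Kim {R k r}. Arguments Qm {R k r}. Arguments Pm {R k r}.
Section T.
Variable R : realType.
Variables (X : topologicalType) (x : X).

Lemma mx_cvg_entries (T : Type) (F : set_system T) (FF : Filter F) m n
  (f : T -> 'M[R]_(m,n)) (M : 'M[R]_(m,n)) :
  (forall i j, (fun x => f x i j) @ F --> M i j) -> f @ F --> M.
Proof.
move=> H S /= [P MP sPS].
apply: (filterS (P := fun x => forall i j, P i j (f x i j))).
  by move=> x0 Hx; apply: sPS.
apply: filter_forall => i; apply: filter_forall => j.
exact: (H i j _ (MP i j)).
Qed.

Definition ctat m n (f : X -> 'M[R]_(m,n)) := {for x, continuous f}.
Definition sct (f : X -> R) := {for x, continuous f}.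
Arguments ctat {m n}.

Lemma ctE m n (f : X -> 'M[R]_(m,n)) :
  (forall i j, sct (fun y => f y i j)) -> ctat f.
Proof. by move=> H; apply: mx_cvg_entries => i j; apply: H. Qed.

Lemma ctent m n (f : X -> 'M[R]_(m,n)) i j : ctat f -> sct (fun y => f y i j).
Proof.
move=> H; apply: (continuous_comp (g := fun M : 'M[R]_(m,n) => M i j) H).
exact: coord_continuous.
Qed.

Lemma sct_cst c : sct (fun _ => c).
Proof. exact: cvg_cst. Qed.

Lemma sct_add f g : sct f -> sct g -> sct (fun y => f y + g y).
Proof. by move=> Hf Hg; apply: cvgD. Qed.

Lemma sct_mul f g : sct f -> sct g -> sct (fun y => f y * g y).
Proof. by move=> Hf Hg; apply: cvgM. Qed.

Lemma sct_opp f : sct f -> sct (fun y => - f y).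
Proof. by move=> Hf; apply: cvgN. Qed.

Lemma sct_inv f : f x != 0 -> sct f -> sct (fun y => (f y)^-1).
Proof. by move=> H Hf; apply: cvgV. Qed.

Lemma sct_sum (I : Type) (r : seq I) (P : pred I) (F : I -> X -> R) :
  (forall i, P i -> sct (F i)) -> sct (fun y => \sum_(i <- r | P i) F i y).
Proof.
move=> H; apply: (@cvg_big R I +%R 0 P _ _ _ _ _ (fun i => F i x)).
- exact: add_continuous.
- by move=> i Pi; apply: H.
Qed.

Lemma sct_prod (I : Type) (r : seq I) (P : pred I) (F : I -> X -> R) :
  (forall i, P i -> sct (F i)) -> sct (fun y => \prod_(i <- r | P i) F i y).
Proof.
move=> H; apply: (@cvg_big R I *%R 1 P _ _ _ _ _ (fun i => F i x)).
- exact: mul_continuous.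
- by move=> i Pi; apply: H.
Qed.

Lemma ct_mul m n p (f : X -> 'M[R]_(m,n)) (g : X -> 'M[R]_(n,p)) :
  ctat f -> ctat g -> ctat (fun y => f y *m g y).
Proof.
move=> Hf Hg; apply: ctE => i j.
have -> : (fun y => (f y *m g y) i j) = (fun y => \sum_k f y i k * g y k j).
  by apply: funext => y; rewrite mxE.
by apply: sct_sum => k _; apply: sct_mul; apply: ctent.
Qed.

Lemma ct_add m n (f g : X -> 'M[R]_(m,n)) :
  ctat f -> ctat g -> ctat (fun y => f y + g y).
Proof.
move=> Hf Hg; apply: ctE => i j.
have -> : (fun y => (f y + g y) i j) = (fun y => f y i j + g y i j).
  by apply: funext => y; rewrite mxE.
by apply: sct_add; apply: ctent.
Qed.

Lemma ct_opp m n (f : X -> 'M[R]_(m,n)) : ctat f -> ctat (fun y => - f y).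
Proof.
move=> Hf; apply: ctE => i j.
have -> : (fun y => (- f y) i j) = (fun y => - f y i j).
  by apply: funext => y; rewrite mxE.
by apply: sct_opp; apply: ctent.
Qed.

Lemma ct_scale m n (c : X -> R) (f : X -> 'M[R]_(m,n)) :
  sct c -> ctat f -> ctat (fun y => c y *: f y).
Proof.
move=> Hc Hf; apply: ctE => i j.
have -> : (fun y => (c y *: f y) i j) = (fun y => c y * f y i j).
  by apply: funext => y; rewrite mxE.
by apply: sct_mul => //; apply: ctent.
Qed.

Lemma ct_cst m n (M : 'M[R]_(m,n)) : ctat (fun _ => M).
Proof. exact: cvg_cst. Qed.

Lemma ct_tr m n (f : X -> 'M[R]_(m,n)) : ctat f -> ctat (fun y => (f y)^T).
Proof.
move=> Hf; apply: ctE => i j.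
have -> : (fun y => (f y)^T i j) = (fun y => f y j i).
  by apply: funext => y; rewrite mxE.
exact: ctent.
Qed.

Lemma ct_usub m1 m2 n (f : X -> 'M[R]_(m1 + m2,n)) : ctat f -> ctat (fun y => usubmx (f y)).
Proof.
move=> Hf; apply: ctE => i j.
have -> : (fun y => usubmx (f y) i j) = (fun y => f y (lshift m2 i) j).
  by apply: funext => y; rewrite mxE.
exact: ctent.
Qed.

Lemma ct_dsub m1 m2 n (f : X -> 'M[R]_(m1 + m2,n)) : ctat f -> ctat (fun y => dsubmx (f y)).
Proof.
move=> Hf; apply: ctE => i j.
have -> : (fun y => dsubmx (f y) i j) = (fun y => f y (rshift m1 i) j).
  by apply: funext => y; rewrite mxE.
exact: ctent.
Qed.

Lemma ct_col m1 m2 n (f : X -> 'M[R]_(m1,n)) (g : X -> 'M[R]_(m2,n)) :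
  ctat f -> ctat g -> ctat (fun y => col_mx (f y) (g y)).
Proof.
move=> Hf Hg; apply: ctE => i j.
rewrite -(fintype.splitK i); case: (fintype.split i) => k /=.
  have -> : (fun y => col_mx (f y) (g y) (lshift m2 k) j) = (fun y => f y k j).
    by apply: funext => y; rewrite col_mxEu.
  exact: ctent.
have -> : (fun y => col_mx (f y) (g y) (rshift m1 k) j) = (fun y => g y k j).
  by apply: funext => y; rewrite col_mxEd.
exact: ctent.
Qed.

Lemma sct_det n (f : X -> 'M[R]_n) : ctat f -> sct (fun y => \det (f y)).
Proof.
move=> Hf.
have -> : (fun y => \det (f y)) =
   (fun y => \sum_(s : 'S_n) ((-1) ^+ s * \prod_i f y i (s i))).
  by apply: funext => y; rewrite /determinant.
apply: sct_sum => s _; apply: sct_mul; first exact: sct_cst.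
by apply: sct_prod => i _; apply: ctent.
Qed.

Lemma ct_adj n (f : X -> 'M[R]_n) : ctat f -> ctat (fun y => \adj (f y)).
Proof.
move=> Hf; apply: ctE => i j.
have -> : (fun y => \adj (f y) i j) =
   (fun y => (-1) ^+ (j + i) * \det (row' j (col' i (f y)))).
  by apply: funext => y; rewrite mxE /cofactor.
apply: sct_mul; first exact: sct_cst.
apply: sct_det; apply: ctE => a b.
have -> : (fun y => row' j (col' i (f y)) a b) = (fun y => f y (lift j a) (lift i b)).
  by apply: funext => y; rewrite !mxE.
exact: ctent.
Qed.


Lemma ct_Pm r k (C : X -> 'M[R]_(r,k)) : ctat C -> \det (Km (C x)) != 0 ->
  ctat (fun y => Pm (C y)) /\ ctat (fun y => Qm (C y)).
Proof.
move=> hC hd.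
have hQ : ctat (fun y => Qm (C y)).
  rewrite /Qm /Kim /Km.
  apply: ct_mul => //; apply: ct_mul; first exact: ct_tr.
  apply: ct_scale.
    apply: sct_inv => //; apply: sct_det; apply: ct_mul => //; exact: ct_tr.
  apply: ct_adj; apply: ct_mul => //; exact: ct_tr.
split => //; rewrite /Pm; apply: ct_add; first exact: ct_cst.
exact: ct_opp.
Qed.
Lemma ct_pair m n m' n' (f : X -> 'M[R]_(m,n)) (g : X -> 'M[R]_(m',n')) :
  ctat f -> ctat g -> {for x, continuous (fun y => (f y, g y))}.
Proof. move=> hf hg; exact (cvg_pair hf hg). Qed.
End T.
Arguments ctat {R X} x {m n}. Arguments sct {R X} x.

Theorem proposition2 (R : realType) (npot nkin m l : nat)
    (Upos : set 'cV[R]_npot)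
    (A : 'cV[R]_npot -> 'M[R]_(l, nkin)) (B : 'cV[R]_npot -> 'M[R]_(nkin, m))
    (G : 'cV[R]_nkin -> 'M[R]_nkin) (Z : 'cV[R]_npot -> 'M[R]_(npot, nkin)) :
  open Upos ->
  {within Upos, continuous A} ->
  {within Upos, continuous B} ->
  continuous G ->
  {within Upos, continuous Z} ->
  (exists r : nat, forall zeta, Upos zeta -> \rank (A zeta) = r) ->
  (forall Gam, (G Gam)^T = - G Gam) ->
  modulated_dirac
    [set x : 'cV[R]_(npot + nkin) | Upos (usubmx x)]
    (fun x => port_D A B G Z (usubmx x) (dsubmx x)).
Proof.
move=> oU cA cB cG cZ [r hr] hG y0 Uy0.
split.
  exact (Dm_dirac _ _ _ _ _ (A (usubmx y0)) (B (usubmx y0)) (G (dsubmx y0)) (Z (usubmx y0)) (hG _)).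
pose z0 := usubmx y0.
have Uz0 : Upos z0 by [].
have /submxP [S hS] : (row_base (A z0) <= A z0)%MS by rewrite eq_row_base.
pose Cf (y : 'cV[R]_(npot + nkin)) := S *m A (usubmx y).
pose df (y : 'cV[R]_(npot + nkin)) := \det (Km (Cf y)).
have hd0 : df y0 != 0 by rewrite /df /Cf -/z0 -hS; apply: gram_det; exact: row_base_free.
have cA' : {in Upos, continuous A} by rewrite -continuous_open_subspace.
have cB' : {in Upos, continuous B} by rewrite -continuous_open_subspace.
have cZ' : {in Upos, continuous Z} by rewrite -continuous_open_subspace.
have ctu : forall y1 : 'cV[R]_(npot + nkin), ctat y1 (fun y => usubmx y).
  by move=> y1; apply: ct_usub; exact: cvg_id.
have ctd : forall y1 : 'cV[R]_(npot + nkin), ctat y1 (fun y => dsubmx y).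
  by move=> y1; apply: ct_dsub; exact: cvg_id.
have ctA : forall y1 : 'cV[R]_(npot + nkin), Upos (usubmx y1) -> ctat y1 (fun y => A (usubmx y)).
  move=> y1 U1; exact (continuous_comp (ctu y1) (cA' _ (mem_set U1))).
have ctB : forall y1 : 'cV[R]_(npot + nkin), Upos (usubmx y1) -> ctat y1 (fun y => B (usubmx y)).
  move=> y1 U1; exact (continuous_comp (ctu y1) (cB' _ (mem_set U1))).
have ctZ : forall y1 : 'cV[R]_(npot + nkin), Upos (usubmx y1) -> ctat y1 (fun y => Z (usubmx y)).
  move=> y1 U1; exact (continuous_comp (ctu y1) (cZ' _ (mem_set U1))).
have ctG : forall y1 : 'cV[R]_(npot + nkin), ctat y1 (fun y => G (dsubmx y)).
  move=> y1; exact (continuous_comp (ctd y1) (cG _)).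
have ctC : forall y1 : 'cV[R]_(npot + nkin), Upos (usubmx y1) -> ctat y1 Cf.
  by move=> y1 U1; apply: ct_mul; [exact: ct_cst| exact: ctA].
have sdf : forall y1 : 'cV[R]_(npot + nkin), Upos (usubmx y1) -> sct y1 df.
  move=> y1 U1; apply: sct_det; apply: ct_mul; first exact: ctC.
  by apply: ct_tr; exact: ctC.
have oW : open [set y : 'cV[R]_(npot + nkin) | Upos (usubmx y)].
  by apply: open_comp => // y _; exact: ctu.
have oUx := (continuous_inP df oW).1
  (fun y1 Wy1 => sdf y1 (set_mem Wy1)) [set x | x != 0] (@open_neq R 0).
exists ([set y : 'cV[R]_(npot + nkin) | Upos (usubmx y)] `&` df @^-1` [set x | x != 0]).
exists (fun y z => Tm R npot nkin m (B (usubmx y)) (G (dsubmx y)) (Z (usubmx y))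
   (Pm (Cf y)) (Qm (Cf y)) z).
split.
- exact: oUx.
- exact: (conj Uy0 hd0).
- by move=> y [].
split.
  move=> y [Uy hdy].
  have hCy : Cf y = S *m A (usubmx y) by [].
  have hsub : (Cf y <= A (usubmx y))%MS by exact: submxMl.
  have hsup : (A (usubmx y) <= Cf y)%MS.
    rewrite -(mxrank_leqif_sup hsub).2 eqn_leq mxrankS //=.
    rewrite (hr _ Uy) -(hr _ Uz0) -{1}(mxrank_unit (A := Km (Cf y))).
      exact: mxrankM_maxl.
    by rewrite unitmxE unitfE.
  have [X hX] := submxP hsup.
  split.
  - by move=> a z1 z2; apply: Tm_lin.
  - move=> z; exact (Tm_in _ _ _ _ _ _ _ _ _ _ _ _ (AP0 _ _ _ _ _ _ _ hdy hX)
       (Qrange _ _ _ _ _ _ _ hCy) z).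
  - by move=> z1 z2; apply: Tm_inj.
  - move=> p hp.
    exact (Tm_surj _ _ _ _ _ _ _ _ _ _ _ erefl (Qker _ _ _ _ _ _ _ hCy)
       (QAt _ _ _ _ _ _ _ hdy hX) p hp).
move=> z; rewrite continuous_open_subspace // => y1 /set_mem [U1 hd1].
have [ctP ctQ] := @ct_Pm R _ y1 _ _ Cf (ctC y1 U1) hd1.
rewrite /Tm /mk.
have hw : ctat y1 (fun y => Pm (Cf y) *m blk2 z).
  by apply: ct_mul; [exact: ctP | exact: ct_cst].
refine (@ct_pair R _ y1 _ _ _ _ _ _ _ _).
  apply: ct_col; [apply: ct_col; [apply: ct_col; [apply: ct_mul; [exact: (ctZ y1 U1)|exact: hw] | exact: ct_cst] | exact: hw] | apply: ct_mul; [apply: ct_tr; exact: (ctB y1 U1) | exact: hw]].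
apply: ct_col; [apply: ct_col; [apply: ct_col; [exact: ct_cst | exact: hw] | ] | exact: ct_cst].
apply: ct_add; [apply: ct_opp; apply: ct_add; [apply: ct_add; [apply: ct_add; [exact: ct_cst| apply: ct_mul; [apply: ct_tr; exact: (ctZ y1 U1) | exact: ct_cst]] | apply: ct_mul; [exact: (ctG y1)| exact: hw]] | apply: ct_mul; [exact: (ctB y1 U1) | exact: ct_cst]] | apply: ct_mul; [exact: ctQ | exact: ct_cst]].
Qed.
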